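(* Let $\beta\in(1,2)$ and let $A(\beta)\subset\mathbb{R}^2$ be a planar convex body which has a centre of symmetry, is symmetric with respect to the $y$-axis, and whose boundary within $[-1,1]^2$ coincides with the graph of $y=|x|^\beta$. Then there exists a small positive constant $c$, independent of $\beta$, such that $$|K_{A(\beta)}(\theta+\pi/2,\lambda)|\approx_\beta\begin{cases}\lambda^{1/\beta} & \text{if } 0\leq|\theta|<\lambda^{\frac{\beta-1}{\beta}}<c,\\ \lambda^{1/2}|\theta|^{\frac{2-\beta}{2(\beta-1)}} & \text{if } \lambda^{\frac{\beta-1}{\beta}}\leq|\theta|<c.\end{cases}$$
   Context: For a planar convex body $C$ (compact convex set with nonempty interior), an angle $\theta$ and $\lambda>0$, with $\mathbf{u}(\theta)=(\cos\theta,\sin\theta)$, the chord is $K_C(\theta,\lambda)=\{\mathbf{x}\in C:\mathbf{x}\cdot\mathbf{u}(\theta)=\inf_{\mathbf{y}\in C}\mathbf{y}\cdot\mathbf{u}(\theta)+\lambda\}$, and $|K_C(\theta,\lambda)|$ denotes its length. The notation $f\approx_\beta g$ means there exist positive constants $c_1,c_2$ depending only on $\beta$ with $c_1 g\leq f\leq c_2 g$ on the stated range. *)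

(* Defs.v *)
From Stdlib Require Import Reals.
From Coquelicot Require Import Coquelicot.
Open Scope R_scope.

Definition pt := (R * R)%type.

Definition dist2 (p q : pt) : R :=
  sqrt ((fst p - fst q) ^ 2 + (snd p - snd q) ^ 2).

Definition dot (p q : pt) : R := fst p * fst q + snd p * snd q.

Definition u (theta : R) : pt := (cos theta, sin theta).

Definition is_closed2 (C : pt -> Prop) : Prop :=
  forall p, (forall eps, 0 < eps -> exists q, C q /\ dist2 p q < eps) -> C p.

Definition is_bounded2 (C : pt -> Prop) : Prop :=
  exists M, forall p, C p -> dist2 p (0, 0) <= M.

Definition is_convex2 (C : pt -> Prop) : Prop :=
  forall p q t, C p -> C q -> 0 <= t <= 1 ->
    C ((1 - t) * fst p + t * fst q, (1 - t) * snd p + t * snd q).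

Definition has_interior2 (C : pt -> Prop) : Prop :=
  exists p eps, 0 < eps /\ forall q, dist2 p q < eps -> C q.

Definition convex_body (C : pt -> Prop) : Prop :=
  is_closed2 C /\ is_bounded2 C /\ is_convex2 C /\ has_interior2 C.

Definition boundary2 (C : pt -> Prop) (p : pt) : Prop :=
  forall eps, 0 < eps ->
    (exists q, C q /\ dist2 p q < eps) /\ (exists q, ~ C q /\ dist2 p q < eps).

Definition centrally_symmetric (C : pt -> Prop) : Prop :=
  exists z : pt, forall p, C p -> C (2 * fst z - fst p, 2 * snd z - snd p).

Definition y_axis_symmetric (C : pt -> Prop) : Prop :=
  forall x y, C (x, y) -> C (- x, y).

Definition abspow (x beta : R) : R :=
  if Req_EM_T x 0 then 0 else Rpower (Rabs x) beta.

Definition boundary_is_graph (beta : R) (C : pt -> Prop) : Prop :=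
  forall x y, -1 <= x <= 1 -> -1 <= y <= 1 ->
    (boundary2 C (x, y) <-> y = abspow x beta).

Definition support_min (C : pt -> Prop) (theta : R) : R :=
  real (Glb_Rbar (fun r => exists y, C y /\ r = dot y (u theta))).

Definition chord (C : pt -> Prop) (theta lambda : R) (x : pt) : Prop :=
  C x /\ dot x (u theta) = support_min C theta + lambda.

(* length of a chord (a segment): its diameter *)
Definition chord_length (C : pt -> Prop) (theta lambda : R) : R :=
  real (Lub_Rbar (fun r => exists p q,
          chord C theta lambda p /\ chord C theta lambda q /\ r = dist2 p q)).

(* Main.v *)
Require Import Defs.
From Stdlib Require Import Reals Lra.
From Coquelicot Require Import Coquelicot.
Open Scope R_scope.

Definition pw (x q : R) : R := if Rle_dec x 0 then 0 else Rpower x q.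

Lemma pw_pos x q : 0 < x -> pw x q = Rpower x q.
Proof. intros; unfold pw; destruct (Rle_dec x 0); [lra|auto]. Qed.
Lemma pw_npos x q : x <= 0 -> pw x q = 0.
Proof. intros; unfold pw; destruct (Rle_dec x 0); [auto|lra]. Qed.
Lemma Rpower_pos x q : 0 < Rpower x q.
Proof. unfold Rpower; apply exp_pos. Qed.
Lemma pw_ge0 x q : 0 <= pw x q.
Proof. unfold pw; destruct (Rle_dec x 0); [lra|]. left; apply Rpower_pos. Qed.
Lemma pw_gt0 x q : 0 < x -> 0 < pw x q.
Proof. intros; rewrite pw_pos; auto; apply Rpower_pos. Qed.
Lemma pw_1 x : 0 <= x -> pw x 1 = x.
Proof. intros [H|H]. rewrite pw_pos; auto; apply Rpower_1; auto. subst; apply pw_npos; lra. Qed.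
Lemma pw_mul x y q : 0 <= x -> 0 <= y -> pw (x*y) q = pw x q * pw y q.
Proof.
  intros [Hx|Hx] [Hy|Hy].
  - rewrite !pw_pos; try nra. symmetry; apply Rpower_mult_distr; auto.
  - subst. rewrite Rmult_0_r, !(pw_npos 0); lra.
  - subst. rewrite Rmult_0_l, !(pw_npos 0); lra.
  - subst. rewrite Rmult_0_l, !(pw_npos 0); lra.
Qed.
Lemma pw_pw x a b : 0 <= x -> pw (pw x a) b = pw x (a*b).
Proof.
  intros [Hx|Hx].
  - rewrite (pw_pos x a) by auto. rewrite (pw_pos x (a*b)) by auto.
    rewrite pw_pos by apply Rpower_pos. apply Rpower_mult.
  - subst. rewrite (pw_npos 0 a) by lra. rewrite (pw_npos 0 (a*b)) by lra. apply pw_npos; lra.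
Qed.
Lemma pw_plus x a b : 0 < x -> pw x (a+b) = pw x a * pw x b.
Proof. intros; rewrite !pw_pos; auto; apply Rpower_plus. Qed.
Lemma pw_plus1 x a : 0 <= x -> pw x (a+1) = pw x a * x.
Proof.
  intros [H|H]. rewrite pw_plus; auto. rewrite pw_1; lra.
  subst. rewrite !pw_npos; lra.
Qed.
Lemma pw_mono x y q : 0 < q -> 0 <= x <= y -> pw x q <= pw y q.
Proof.
  intros Hq [[Hx|Hx] Hxy].
  - rewrite !pw_pos; try lra. apply Rle_Rpower_l; lra.
  - subst. rewrite (pw_npos 0); [apply pw_ge0|lra].
Qed.
Lemma pw_smono x y q : 0 < q -> 0 <= x < y -> pw x q < pw y q.
Proof.
  intros Hq [[Hx|Hx] Hxy].
  - rewrite !pw_pos; try lra. apply Rlt_Rpower_l; lra.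
  - subst. rewrite (pw_npos 0); [apply pw_gt0|]; lra.
Qed.
Lemma pw_anti x y q : q < 0 -> 0 < x <= y -> pw y q <= pw x q.
Proof.
  intros Hq [Hx Hxy]. rewrite !pw_pos; try lra.
  unfold Rpower.
  destruct (Rle_lt_or_eq_dec _ _ Hxy) as [H|H]; [|subst; lra].
  left. apply exp_increasing. assert (ln x < ln y) by (apply ln_increasing; lra). nra.
Qed.
Lemma pw_exp_anti x a b : 0 <= x <= 1 -> 0 < a <= b -> pw x b <= pw x a.
Proof.
  intros [[Hx|Hx] Hx1] Hab.
  - rewrite !pw_pos; auto. unfold Rpower.
    assert (ln x <= 0). { destruct Hx1 as [H|H]. left; rewrite <- ln_1; apply ln_increasing; lra. subst; rewrite ln_1; lra. }
    destruct (Rle_lt_or_eq_dec _ _ (proj2 Hab)) as [H1|H1]; [|subst; lra].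
    destruct (Rle_lt_or_eq_dec _ _ H) as [H2|H2].
    + left; apply exp_increasing. nra.
    + rewrite H2, !Rmult_0_r; lra.
  - subst. rewrite !pw_npos; lra.
Qed.
Lemma pw_le_base x q : 0 <= x <= 1 -> 1 <= q -> pw x q <= x.
Proof.
  intros Hx Hq. destruct (Rle_lt_or_eq_dec _ _ Hq) as [H|H].
  rewrite <- (pw_1 x) at 2 by lra. apply pw_exp_anti; lra.
  subst; rewrite pw_1; lra.
Qed.
Lemma pw_ge_base x q : 0 <= x <= 1 -> 0 < q <= 1 -> x <= pw x q.
Proof.
  intros Hx Hq. rewrite <- (pw_1 x) at 1 by lra. apply pw_exp_anti; lra.
Qed.
Lemma pw_inv x a : 0 < x -> a <> 0 -> pw (pw x a) (/a) = x.
Proof. intros. rewrite pw_pw by lra. rewrite Rinv_r by auto. apply pw_1; lra. Qed.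

Lemma pw_MVT y z q : 0 < y < z -> exists c, y < c < z /\ pw z q - pw y q = q * pw c (q-1) * (z - y).
Proof.
  intros [Hy Hz].
  destruct (MVT_cor2 (fun x => Rpower x q) (fun x => q * Rpower x (q-1)) y z) as [c [Hc1 Hc2]]; auto.
  intros c Hc. apply derivable_pt_lim_power. lra.
  exists c; split; auto. rewrite !pw_pos; lra.
Qed.

Lemma E1 y z r : 0 < r < 1 -> 0 <= y <= z -> pw z r <= pw y r + pw (z-y) r.
Proof.
  intros Hr [Hy Hyz]. destruct (Rle_lt_or_eq_dec 0 z ltac:(lra)) as [Hz|Hz].
  - set (u1 := y / z). set (u2 := (z - y)/z).
    assert (E1: y = z * u1) by (unfold u1; field; lra).
    assert (E2: z - y = z * u2) by (unfold u2; field; lra).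
    assert (0 <= u1 <= 1). { unfold u1; split. apply Rdiv_le_0_compat; lra.
      apply Rmult_le_reg_r with z; auto. unfold Rdiv; rewrite Rmult_assoc, Rinv_l; lra. }
    assert (u1 + u2 = 1) by (unfold u1, u2; field; lra).
    rewrite E2, E1. rewrite !pw_mul by lra.
    pose proof (pw_ge_base u1 r ltac:(lra) ltac:(lra)).
    pose proof (pw_ge_base u2 r ltac:(lra) ltac:(lra)).
    pose proof (pw_ge0 z r). nra.
  - subst. assert (y = 0) by lra. subst. rewrite Rminus_0_r, !(pw_npos 0); lra.
Qed.

Lemma E2 y z r : 0 < r < 1 -> 0 < y <= z -> pw z r - pw y r <= r * pw y (r-1) * (z-y).
Proof.
  intros Hr [Hy Hyz]. destruct (Rle_lt_or_eq_dec _ _ Hyz) as [H|H]; [|subst; replace (z-z) with 0 by ring; rewrite Rmult_0_r; lra].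
  destruct (pw_MVT y z r) as [c [Hc Heq]]; [lra|]. rewrite Heq.
  pose proof (pw_anti y c (r-1) ltac:(lra) ltac:(lra)).
  apply Rmult_le_compat_r; [lra|]. apply Rmult_le_compat_l; lra.
Qed.

Lemma E3 y z r : 0 < r < 1 -> 0 <= y <= z -> 0 < z -> pw z r - pw y r >= r * pw z (r-1) * (z-y).
Proof.
  intros Hr [Hy Hyz] Hz. destruct (Rle_lt_or_eq_dec _ _ Hy) as [Hy'|Hy'].
  - destruct (Rle_lt_or_eq_dec _ _ Hyz) as [H|H]; [|subst; replace (z-z) with 0 by ring; rewrite Rmult_0_r; lra].
    destruct (pw_MVT y z r) as [c [Hc Heq]]; [lra|]. rewrite Heq.
    pose proof (pw_anti c z (r-1) ltac:(lra) ltac:(lra)).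
    apply Rle_ge, Rmult_le_compat_r; [lra|]. apply Rmult_le_compat_l; lra.
  - subst. rewrite (pw_npos 0) by lra. rewrite Rminus_0_r.
    assert (pw z r = pw z (r-1) * z). { rewrite <- pw_plus1 by lra. f_equal; ring. }
    pose proof (pw_ge0 z (r-1)). assert (0 <= pw z (r-1) * z) by nra. nra.
Qed.

Lemma E4 v w b : 1 < b -> 0 <= v -> 0 <= w -> pw w b >= pw v b + b * pw v (b-1) * (w - v).
Proof.
  intros Hb Hv Hw.
  assert (Hvb: pw v b = pw v (b-1) * v). { rewrite <- pw_plus1 by lra. f_equal; ring. }
  destruct (Rle_lt_or_eq_dec _ _ Hv) as [Hv'|Hv']; [destruct (Rle_lt_or_eq_dec _ _ Hw) as [Hw'|Hw']|].
  - destruct (Rtotal_order v w) as [H|[H|H]].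
    + destruct (pw_MVT v w b) as [c [Hc Heq]]; [lra|].
      pose proof (pw_mono v c (b-1) ltac:(lra) ltac:(lra)).
      assert (b * pw v (b-1) * (w-v) <= b * pw c (b-1) * (w - v)).
      { apply Rmult_le_compat_r; [lra|]. apply Rmult_le_compat_l; lra. } lra.
    + subst; nra.
    + destruct (pw_MVT w v b) as [c [Hc Heq]]; [lra|].
      pose proof (pw_mono c v (b-1) ltac:(lra) ltac:(lra)).
      assert (b * pw c (b-1) * (v-w) <= b * pw v (b-1) * (v - w)).
      { apply Rmult_le_compat_r; [lra|]. apply Rmult_le_compat_l; lra. } lra.
  - subst. rewrite (pw_npos 0) by lra. pose proof (pw_ge0 v (b-1)).
    assert (0 <= pw v (b-1) * v) by nra. nra.
  - subst. rewrite !(pw_npos 0) by lra. pose proof (pw_ge0 w b). lra.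
Qed.

Definition hh b t x := pw (Rabs x) b - t * x.
Definition x0f b t := pw (t/b) (/(b-1)).
Definition mf b t := hh b t (x0f b t).

Lemma pw_b_split x b : 0 <= x -> pw x b = pw x (b-1) * x.
Proof. intros. rewrite <- pw_plus1 by lra. f_equal; ring. Qed.

Lemma x0_facts b t : 1 < b < 2 -> 0 <= t <= 1/5 ->
  0 <= x0f b t <= t /\ b * pw (x0f b t) (b-1) = t /\ mf b t = (1-b) * pw (x0f b t) b /\ mf b t <= 0.
Proof.
  intros Hb Ht. unfold mf, x0f, hh.
  assert (H0: 0 <= t/b <= 1). { split. apply Rdiv_le_0_compat; lra.
     apply Rmult_le_reg_r with b; [lra|]. unfold Rdiv; rewrite Rmult_assoc, Rinv_l; lra. }
  assert (Hx: 0 <= pw (t/b) (/(b-1)) <= t).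
  { split. apply pw_ge0. eapply Rle_trans. apply pw_le_base; auto.
    rewrite <- Rinv_1. apply Rinv_le_contravar; lra.
    apply Rmult_le_reg_r with b; [lra|]. unfold Rdiv; rewrite Rmult_assoc, Rinv_l; nra. }
  set (x0 := pw (t/b) (/(b-1))) in *.
  assert (Hr: b * pw x0 (b-1) = t).
  { unfold x0. rewrite pw_pw by lra. rewrite Rinv_l by lra. rewrite pw_1 by lra. field. lra. }
  rewrite Rabs_pos_eq by lra.
  assert (Hm: pw x0 b - t * x0 = (1-b) * pw x0 b).
  { rewrite <- Hr. rewrite (pw_b_split x0 b) by lra. ring. }
  repeat split; try lra. rewrite Hm. pose proof (pw_ge0 x0 b). nra.
Qed.

Lemma T_ineq b t x : 1 < b < 2 -> 0 <= t <= 1/5 -> hh b t x >= mf b t.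
Proof.
  intros Hb Ht. destruct (x0_facts b t Hb Ht) as [Hx [Hr [Hm Hm0]]].
  destruct (Rle_or_lt 0 x) as [H|H].
  - unfold mf, hh. rewrite !Rabs_pos_eq by lra.
    pose proof (E4 (x0f b t) x b ltac:(lra) ltac:(lra) H). nra.
  - unfold hh at 1. rewrite Rabs_left by lra. pose proof (pw_ge0 (-x) b). nra.
Qed.

Lemma D_right_up b t s : 1 < b < 2 -> 0 <= t <= 1/5 -> 0 <= s ->
  hh b t (x0f b t + s) - mf b t <= b * s * (pw (x0f b t + s) (b-1) - pw (x0f b t) (b-1)).
Proof.
  intros Hb Ht Hs. destruct (x0_facts b t Hb Ht) as [Hx [Hr [Hm Hm0]]].
  set (x0 := x0f b t) in *. unfold mf, hh. fold x0. rewrite !Rabs_pos_eq by lra.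
  pose proof (E4 (x0+s) x0 b ltac:(lra) ltac:(lra) ltac:(lra)). nra.
Qed.

Lemma D_right_low b t a : 1 < b < 2 -> 0 <= t <= 1/5 -> 0 <= a ->
  hh b t (x0f b t + 2*a) - mf b t >= b * a * (pw (x0f b t + a) (b-1) - pw (x0f b t) (b-1)).
Proof.
  intros Hb Ht Ha. destruct (x0_facts b t Hb Ht) as [Hx [Hr [Hm Hm0]]].
  set (x0 := x0f b t) in *. unfold mf, hh. fold x0. rewrite !Rabs_pos_eq by lra.
  pose proof (E4 (x0+a) (x0+2*a) b ltac:(lra) ltac:(lra) ltac:(lra)).
  pose proof (E4 x0 (x0+a) b ltac:(lra) ltac:(lra) ltac:(lra)). nra.
Qed.

Lemma D_left_low b t a : 1 < b < 2 -> 0 <= t <= 1/5 -> 0 <= a -> 0 <= x0f b t - 2*a ->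
  hh b t (x0f b t - 2*a) - mf b t >= b * a * (pw (x0f b t) (b-1) - pw (x0f b t - a) (b-1)).
Proof.
  intros Hb Ht Ha Hxa. destruct (x0_facts b t Hb Ht) as [Hx [Hr [Hm Hm0]]].
  set (x0 := x0f b t) in *. unfold mf, hh. fold x0. rewrite !Rabs_pos_eq by lra.
  pose proof (E4 (x0-a) (x0-2*a) b ltac:(lra) ltac:(lra) ltac:(lra)).
  pose proof (E4 x0 (x0-a) b ltac:(lra) ltac:(lra) ltac:(lra)). nra.
Qed.

Lemma pw_2 x : 0 <= x -> pw x 2 = x * x.
Proof.
  intros [H|H]. rewrite pw_pos by auto. replace 2 with (INR 2) by (simpl; ring).
  rewrite Rpower_pow by auto. simpl; ring. subst; rewrite pw_npos; lra.
Qed.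
Lemma pw_one q : pw 1 q = 1.
Proof. rewrite pw_pos by lra. unfold Rpower. rewrite ln_1, Rmult_0_r, exp_0. auto. Qed.
Lemma pw_m1 x : 0 < x -> pw x (-1) = / x.
Proof. intros. rewrite pw_pos by auto. replace (-1) with (-(1)) by ring. rewrite Rpower_Ropp, Rpower_1; auto. Qed.

Lemma pw_ge_pw2 x b : 0 <= x <= 1 -> b <= 2 -> 1 < b -> x * x <= pw x b.
Proof. intros. rewrite <- pw_2 by lra. apply pw_exp_anti; lra. Qed.

Lemma small_of_pw s b c : 1 < b < 2 -> 0 <= s -> 0 <= c <= 1 -> pw s b < c * c -> s < c.
Proof.
  intros Hb Hs Hc H. destruct (Rlt_or_le s c) as [|H1]; auto.
  pose proof (pw_mono c s b ltac:(lra) ltac:(lra)). pose proof (pw_ge_pw2 c b Hc ltac:(lra) ltac:(lra)). lra.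
Qed.

Lemma hh_half b t mu : 1 < b < 2 -> 0 <= t <= 1/5 -> 0 < mu <= 1/50 ->
  hh b t (1/2) > mf b t + mu /\ hh b t (-1/2) > mf b t + mu.
Proof.
  intros Hb Ht Hmu. destruct (x0_facts b t Hb Ht) as [Hx [Hr [Hm Hm0]]].
  unfold hh. rewrite Rabs_pos_eq by lra. rewrite Rabs_left by lra.
  replace (- (-1/2)) with (1/2) by field.
  pose proof (pw_ge_pw2 (1/2) b ltac:(lra) ltac:(lra) ltac:(lra)). split; nra.
Qed.

Lemma L1 b t mu : 1 < b < 2 -> 0 <= t <= 1/5 -> 0 < mu <= 1/50 ->
  let s := pw (mu/b) (/b) in
  0 < s /\ x0f b t + s <= 1/2 /\ hh b t (x0f b t + s) <= mf b t + mu.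
Proof.
  intros Hb Ht Hmu s. destruct (x0_facts b t Hb Ht) as [Hx [Hr [Hm Hm0]]].
  assert (Hs0: 0 < s) by (apply pw_gt0; apply Rdiv_lt_0_compat; lra).
  assert (Hsb: pw s b = mu / b).
  { unfold s. rewrite pw_pw. rewrite Rinv_l by lra. apply pw_1. left; apply Rdiv_lt_0_compat; lra.
    left; apply Rdiv_lt_0_compat; lra. }
  assert (mu / b <= 1/50). { apply Rmult_le_reg_r with b; [lra|]. unfold Rdiv; rewrite Rmult_assoc, Rinv_l; nra. }
  assert (s < 3/10) by (apply (small_of_pw s b); lra).
  split; [auto|split;[lra|]].
  pose proof (D_right_up b t s Hb Ht ltac:(lra)).
  pose proof (E1 (x0f b t) (x0f b t + s) (b-1) ltac:(lra) ltac:(lra)).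
  replace (x0f b t + s - x0f b t) with s in H2 by ring.
  assert (b * s * (pw (x0f b t + s) (b - 1) - pw (x0f b t) (b - 1)) <= b * s * pw s (b-1)).
  { apply Rmult_le_compat_l; nra. }
  assert (b * s * pw s (b-1) = mu). { rewrite Rmult_assoc, (Rmult_comm s), <- pw_b_split, Hsb by lra. field; lra. }
  lra.
Qed.

Lemma L2 b t mu : 1 < b < 2 -> 0 <= t <= 1/5 -> 0 < mu <= 1/50 -> 0 < x0f b t ->
  let s := sqrt (mu / (b * pw (x0f b t) (b-2))) in
  0 < s /\ x0f b t + s <= 1/2 /\ hh b t (x0f b t + s) <= mf b t + mu.
Proof.
  intros Hb Ht Hmu Hx0 s. destruct (x0_facts b t Hb Ht) as [Hx [Hr [Hm Hm0]]].
  set (x0 := x0f b t) in *. set (Q := pw x0 (b-2)).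
  assert (HQ: 1 <= Q). { rewrite <- (pw_one (b-2)). apply pw_anti; lra. }
  assert (Hq: 0 < mu / (b * Q)) by (apply Rdiv_lt_0_compat; nra).
  assert (Hs0: 0 < s) by (apply sqrt_lt_R0; auto).
  assert (Hss: s * s = mu / (b*Q)) by (apply sqrt_sqrt; lra).
  assert (mu / (b*Q) <= 1/50). { apply Rmult_le_reg_r with (b*Q); [nra|]. unfold Rdiv; rewrite Rmult_assoc, Rinv_l; nra. }
  assert (s < 3/10) by nra.
  split; [auto|split;[lra|]].
  pose proof (D_right_up b t s Hb Ht ltac:(lra)). fold x0 in H1.
  pose proof (E2 x0 (x0 + s) (b-1) ltac:(lra) ltac:(lra)).
  replace (x0 + s - x0) with s in H2 by ring. replace (b-1-1) with (b-2) in H2 by ring. fold Q in H2.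
  assert (b * s * (pw (x0 + s) (b - 1) - pw x0 (b - 1)) <= b * s * ((b-1) * Q * s)).
  { apply Rmult_le_compat_l; nra. }
  assert (b * s * ((b-1) * Q * s) = (b-1) * mu). { replace (b * s * ((b-1) * Q * s)) with ((b-1)*(b*Q)*(s*s)) by ring.
     rewrite Hss. field. nra. }
  nra.
Qed.

Lemma clamp_right b t mu p : 1 < b < 2 -> 0 <= t <= 1/5 -> 0 < mu <= 1/50 ->
  x0f b t < p -> hh b t p > mf b t + mu ->
  exists q, x0f b t < q <= 1/2 /\ q <= p /\ hh b t q > mf b t + mu.
Proof.
  intros Hb Ht Hmu Hp Hh. destruct (x0_facts b t Hb Ht) as [Hx _].
  destruct (Rle_lt_dec p (1/2)). exists p; repeat split; lra.
  exists (1/2). pose proof (hh_half b t mu Hb Ht Hmu). repeat split; lra.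
Qed.
Lemma clamp_left b t mu p : 1 < b < 2 -> 0 <= t <= 1/5 -> 0 < mu <= 1/50 ->
  p < x0f b t -> hh b t p > mf b t + mu ->
  exists q, -1/2 <= q < x0f b t /\ p <= q /\ hh b t q > mf b t + mu.
Proof.
  intros Hb Ht Hmu Hp Hh. destruct (x0_facts b t Hb Ht) as [Hx _].
  destruct (Rle_lt_dec (-1/2) p). exists p; repeat split; lra.
  exists (-1/2). pose proof (hh_half b t mu Hb Ht Hmu). repeat split; lra.
Qed.

Definition Ubound b t mu W := exists b1 b2, -1/2 <= b1 < x0f b t /\ x0f b t < b2 <= 1/2 /\
  hh b t b1 > mf b t + mu /\ hh b t b2 > mf b t + mu /\ b2 - b1 <= W.

Lemma U1 b t mu K0 : 1 < b < 2 -> 0 <= t <= 1/5 -> 0 < mu <= 1/50 -> 0 < K0 ->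
  x0f b t <= K0 * pw mu (/b) ->
  Ubound b t mu (4 * (pw 2 (/(b-1)) * K0 + 2) * pw mu (/b)).
Proof.
  intros Hb Ht Hmu HK Hx0. destruct (x0_facts b t Hb Ht) as [Hx [Hr [Hm Hm0]]].
  set (x0 := x0f b t) in *. set (w := pw mu (/b)) in *.
  set (P2 := pw 2 (/(b-1))).
  assert (HP2: 1 <= P2). { unfold P2. pose proof (pw_mono 1 2 (/(b-1))) as HH. rewrite pw_one in HH.
     apply HH. apply Rinv_0_lt_compat; lra. lra. }
  assert (HP2r: pw P2 (b-1) = 2). { unfold P2. rewrite pw_pw by lra. rewrite Rinv_l by lra. apply pw_1; lra. }
  set (N := P2 * K0 + 2). set (a := N * w).
  assert (Hw: 0 < w) by (apply pw_gt0; lra).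
  assert (Hwb: pw w b = mu). { unfold w. rewrite pw_pw by lra. rewrite Rinv_l by lra. apply pw_1; lra. }
  assert (Ha2: 2 * w <= a) by (unfold a, N; nra).
  assert (Hax: x0 <= a) by (unfold a, N; nra).
  assert (H2b: 2 <= pw 2 b). { rewrite pw_b_split by lra. assert (1 <= pw 2 (b-1)).
     { pose proof (pw_mono 1 2 (b-1)) as HH. rewrite pw_one in HH. apply HH; lra. } lra. }
  assert (Hab: 2 * mu <= pw a b).
  { apply Rle_trans with (pw (2*w) b). rewrite pw_mul, Hwb by lra. nra. apply pw_mono; lra. }
  assert (HR: hh b t (x0 + 2*a) > mf b t + mu).
  { pose proof (D_right_low b t a Hb Ht ltac:(lra)) as HD. fold x0 in HD.
    assert (h1: pw x0 (b-1) <= pw (K0*w) (b-1)) by (apply pw_mono; lra).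
    assert (h2: pw (P2 * (K0*w)) (b-1) = 2 * pw (K0*w) (b-1)) by (rewrite pw_mul, HP2r by nra; ring).
    assert (h3: pw (P2 * (K0*w)) (b-1) <= pw a (b-1)) by (apply pw_mono; [lra|]; split; [nra|]; unfold a, N; nra).
    assert (h4: pw a (b-1) <= pw (x0+a) (b-1)) by (apply pw_mono; lra).
    assert (h5: pw a (b-1) / 2 <= pw (x0 + a) (b-1) - pw x0 (b-1)) by lra.
    assert (h6: b * a * (pw a (b-1) / 2) <= b * a * (pw (x0 + a) (b-1) - pw x0 (b-1))).
    { apply Rmult_le_compat_l; [nra|auto]. }
    assert (h7: b * a * (pw a (b-1) / 2) = b * pw a b / 2) by (rewrite (pw_b_split a b) by lra; field).
    nra. }
  assert (Ha0: 0 < a) by (unfold a, N; nra).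
  assert (HL: hh b t (x0 - 2*a) > mf b t + mu).
  { unfold hh. rewrite Rabs_left by lra.
    assert (pw a b <= pw (- (x0 - 2*a)) b) by (apply pw_mono; lra).
    assert (0 <= t * (2*a - x0)) by (apply Rmult_le_pos; lra). nra. }
  assert (HA1: x0 < x0 + 2*a) by lra. assert (HA2: x0 - 2*a < x0) by lra.
  destruct (clamp_right b t mu (x0 + 2*a) Hb Ht Hmu HA1 HR) as [q2 [Hq2 [Hq2' Hh2]]].
  destruct (clamp_left b t mu (x0 - 2*a) Hb Ht Hmu HA2 HL) as [q1 [Hq1 [Hq1' Hh1]]].
  exists q1, q2. repeat split; try lra.
  assert (a = N * w) by reflexivity. lra.
Qed.

Lemma U2 b t mu : 1 < b < 2 -> 0 <= t <= 1/5 -> 0 < mu <= 1/50 -> 0 < x0f b t ->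
  16 * mu / (b * (b-1)) <= pw (x0f b t) b ->
  Ubound b t mu (4 * sqrt (4 * mu / (b * (b-1) * pw (x0f b t) (b-2)))).
Proof.
  intros Hb Ht Hmu Hx0 Hbig. destruct (x0_facts b t Hb Ht) as [Hx [Hr [Hm Hm0]]].
  set (x0 := x0f b t) in *. set (Q := pw x0 (b-2)).
  assert (HQ: 0 < Q) by (apply pw_gt0; lra).
  assert (HxQ: pw x0 b = Q * x0 * x0).
  { rewrite (pw_b_split x0 b) by lra. rewrite (pw_b_split x0 (b-1)) by lra. unfold Q. replace (b-1-1) with (b-2) by ring. ring. }
  assert (Hbr: 0 < b * (b-1) * Q) by (apply Rmult_lt_0_compat; nra).
  set (a := sqrt (4 * mu / (b * (b-1) * Q))).
  assert (Ha0: 0 < a) by (apply sqrt_lt_R0; apply Rdiv_lt_0_compat; lra).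
  assert (Haa: a * a = 4 * mu / (b * (b-1) * Q)) by (apply sqrt_sqrt; left; apply Rdiv_lt_0_compat; lra).
  assert (HaaQ: b * (b-1) * Q * (a * a) = 4 * mu) by (rewrite Haa; field; lra).
  assert (Hax: a <= x0 / 2).
  { assert (a * a <= (x0/2) * (x0/2)).
    { rewrite Haa. apply Rmult_le_reg_r with (b * (b-1) * Q); [lra|].
      unfold Rdiv. rewrite Rmult_assoc, Rinv_l by lra.
      assert (16 * mu <= b * (b-1) * pw x0 b).
      { apply Rmult_le_reg_r with (/ (b * (b-1))). apply Rinv_0_lt_compat; nra.
        replace (b * (b - 1) * pw x0 b * / (b * (b - 1))) with (pw x0 b) by (field; nra). exact Hbig. }
      rewrite HxQ in H. nra. }
    nra. }
  assert (HR: hh b t (x0 + 2*a) > mf b t + mu).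
  { pose proof (D_right_low b t a Hb Ht ltac:(lra)) as HD. fold x0 in HD.
    pose proof (E3 x0 (x0+a) (b-1) ltac:(lra) ltac:(lra) ltac:(lra)) as H3.
    replace (x0 + a - x0) with a in H3 by ring. replace (b-1-1) with (b-2) in H3 by ring.
    assert (h1: pw (2*x0) (b-2) <= pw (x0+a) (b-2)) by (apply pw_anti; lra).
    assert (h2: pw (2*x0) (b-2) = pw 2 (b-2) * Q) by (rewrite pw_mul by lra; auto).
    assert (h3: / 2 <= pw 2 (b-2)).
    { rewrite <- pw_m1 by lra. rewrite !pw_pos by lra. apply Rle_Rpower; lra. }
    assert (h4: Q / 2 <= pw (x0+a) (b-2)) by nra.
    assert (h5: (b-1) * (Q/2) * a <= pw (x0 + a) (b - 1) - pw x0 (b - 1)).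
    { apply Rge_le in H3. eapply Rle_trans; [|exact H3]. apply Rmult_le_compat_r; [lra|]. apply Rmult_le_compat_l; lra. }
    assert (h6: b * a * ((b-1) * (Q/2) * a) <= b * a * (pw (x0 + a) (b - 1) - pw x0 (b - 1))).
    { apply Rmult_le_compat_l; nra. }
    assert (b * a * ((b-1) * (Q/2) * a) = 2 * mu) by (replace (2*mu) with ((4*mu)/2) by field; rewrite <- HaaQ; field).
    nra. }
  assert (HL: hh b t (x0 - 2*a) > mf b t + mu).
  { pose proof (D_left_low b t a Hb Ht ltac:(lra) ltac:(fold x0; lra)) as HD. fold x0 in HD.
    pose proof (E3 (x0-a) x0 (b-1) ltac:(lra) ltac:(lra) ltac:(lra)) as H3.
    replace (x0 - (x0 - a)) with a in H3 by ring. replace (b-1-1) with (b-2) in H3 by ring. fold Q in H3.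
    assert (h6: b * a * ((b-1) * Q * a) <= b * a * (pw x0 (b - 1) - pw (x0 - a) (b - 1))).
    { apply Rmult_le_compat_l; nra. }
    assert (b * a * ((b-1) * Q * a) = 4 * mu) by (rewrite <- HaaQ; ring).
    nra. }
  exists (x0 - 2*a), (x0 + 2*a). repeat split; try lra.
  all: change (x0f b t) with x0; lra.
Qed.

Lemma abspow_pw x b : abspow x b = pw (Rabs x) b.
Proof.
  unfold abspow, pw. destruct (Req_EM_T x 0); destruct (Rle_dec (Rabs x) 0); auto.
  subst; rewrite Rabs_R0 in n; lra.
  exfalso; pose proof (Rabs_pos x); assert (Rabs x = 0) by lra. apply n, (Rabs_eq_0 x); auto.
Qed.

Lemma Rabs_le_inv a c : Rabs a <= c -> -c <= a <= c.
Proof. unfold Rabs; destruct (Rcase_abs a); lra. Qed.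

Lemma abs_le_dist a c : Rabs a <= sqrt (a^2 + c^2).
Proof.
  rewrite <- sqrt_Rsqr_abs. apply sqrt_le_1_alt. unfold Rsqr. nra.
Qed.

Lemma conv_pt A p q tau x y : is_convex2 A -> A p -> A q -> 0 <= tau <= 1 ->
  x = (1 - tau) * fst p + tau * fst q -> y = (1 - tau) * snd p + tau * snd q -> A (x, y).
Proof. intros HC Hp Hq Ht -> ->. apply HC; auto. Qed.

Lemma f_le b x : 1 < b < 2 -> Rabs x <= 1 -> 0 <= pw (Rabs x) b <= Rabs x.
Proof. intros. split. apply pw_ge0. apply pw_le_base. pose proof (Rabs_pos x); lra. lra. Qed.

Lemma f_lip b x x' : 1 < b < 2 -> Rabs x <= 1 -> Rabs x' <= 1 ->
  pw (Rabs x') b <= pw (Rabs x) b + 2 * Rabs (x' - x).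
Proof.
  intros Hb Hx Hx'. pose proof (E4 (Rabs x') (Rabs x) b ltac:(lra) (Rabs_pos _) (Rabs_pos _)) as H.
  assert (H1: pw (Rabs x') (b-1) <= 1).
  { pose proof (pw_mono (Rabs x') 1 (b-1) ltac:(lra) ltac:(split; [apply Rabs_pos|lra])). rewrite pw_one in H0; auto. }
  pose proof (pw_ge0 (Rabs x') (b-1)).
  pose proof (Rabs_triang_inv x' x). pose proof (Rabs_triang_inv x x').
  rewrite Rabs_minus_sym in H3.
  destruct (Rle_or_lt (Rabs x') (Rabs x)).
  - assert (b * pw (Rabs x') (b-1) * (Rabs x - Rabs x') >= 0).
    { apply Rle_ge, Rmult_le_pos; [|lra]. nra. } pose proof (Rabs_pos (x'-x)). lra.
  - assert (b * pw (Rabs x') (b-1) * (Rabs x' - Rabs x) <= 2 * (Rabs x' - Rabs x)).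
    { apply Rmult_le_compat_r; [lra|]. nra. } lra.
Qed.


Definition Hyp b A := convex_body A /\ boundary_is_graph b A.

Lemma graph_in b A x : 1 < b < 2 -> Hyp b A -> Rabs x <= 1 -> A (x, pw (Rabs x) b).
Proof.
  intros Hb [[HCl _] HG] Hx. apply HCl. intros eps Heps.
  pose proof (f_le b x Hb Hx).
  assert (HB: boundary2 A (x, pw (Rabs x) b)).
  { apply HG. apply Rabs_le_inv; auto. lra. rewrite abspow_pw; auto. }
  destruct (HB eps Heps) as [[q [Hq Hd]] _]. exists q; split; auto.
Qed.

Lemma above_in b A x y : 1 < b < 2 -> Hyp b A -> Rabs x <= 1 -> pw (Rabs x) b <= y <= 1 -> A (x, y).
Proof.
  intros Hb HA Hx Hy. pose proof HA as [[_ [_ [HC _]]] _].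
  assert (Hm: A (-1, 1)). { pose proof (graph_in b A (-1) Hb HA). replace (Rabs (-1)) with 1 in H by (unfold Rabs; destruct Rcase_abs; lra). rewrite pw_one in H.
    apply H; lra. }
  assert (Hp: A (1, 1)). { pose proof (graph_in b A 1 Hb HA). rewrite Rabs_R1, pw_one in H. apply H; lra. }
  assert (Hx1: A (x, 1)).
  { apply (conv_pt A (-1,1) (1,1) ((x+1)/2)); auto; simpl. pose proof (Rabs_le_inv _ _ Hx) as [? ?]. split; lra. field. ring. }
  pose proof (graph_in b A x Hb HA Hx) as Hg.
  destruct (Rle_lt_or_eq_dec _ _ (proj2 Hy)) as [Hy1|Hy1]; [|subst; auto].
  pose proof (f_le b x Hb Hx).
  apply (conv_pt A _ _ ((y - pw (Rabs x) b)/(1 - pw (Rabs x) b)) x y HC Hg Hx1); simpl.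
  - split. apply Rdiv_le_0_compat; lra. apply Rmult_le_reg_r with (1 - pw (Rabs x) b); [lra|].
    unfold Rdiv; rewrite Rmult_assoc, Rinv_l; lra.
  - ring.
  - field. lra.
Qed.

Lemma below_out b A x y : 1 < b < 2 -> Hyp b A -> Rabs x <= 1/2 -> y < pw (Rabs x) b -> ~ A (x, y).
Proof.
  intros Hb HA Hx Hy Hxy. pose proof HA as [[_ [_ [HC _]]] HG].
  set (fx := pw (Rabs x) b) in *.
  pose proof (f_le b x Hb ltac:(lra)) as Hf. fold fx in Hf.
  assert (HP: A (x, fx)) by (apply graph_in; auto; lra).
  set (g := Rmin (fx - y) (1/8)).
  assert (Hg: 0 < g <= fx - y /\ g <= 1/8) by (unfold g; split; [split|]; [apply Rmin_glb_lt| apply Rmin_l | apply Rmin_r]; lra).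
  assert (Hp': A (x, fx - g)).
  { apply (conv_pt A _ _ (1 - g / (fx - y)) x (fx - g) HC Hxy HP); simpl.
    - split; [|assert (0 <= g/(fx-y)) by (apply Rdiv_le_0_compat; lra); lra].
      assert (g / (fx - y) <= 1); [|lra]. apply Rmult_le_reg_r with (fx - y); [lra|].
      unfold Rdiv; rewrite Rmult_assoc, Rinv_l; lra.
    - ring.
    - field. lra. }
  assert (HB: boundary2 A (x, fx)).
  { apply HG. apply Rabs_le_inv; lra. lra. unfold fx; rewrite abspow_pw; auto. }
  destruct (HB (g/8) ltac:(lra)) as [_ [[qx qy] [Hq Hd]]].
  unfold dist2 in Hd; cbn [fst snd] in Hd.
  pose proof (abs_le_dist (x - qx) (fx - qy)). pose proof (abs_le_dist (fx - qy) (x - qx)).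
  rewrite Rplus_comm in H0.
  assert (Hdx: Rabs (x - qx) < g/8) by lra. assert (Hdy: Rabs (fx - qy) < g/8) by lra.
  apply Rabs_def2 in Hdx. apply Rabs_def2 in Hdy.
  pose proof (Rabs_le_inv _ _ Hx).
  assert (Hr: A (2*qx - x, 2*qy - fx + g)).
  { apply above_in with b; auto.
    - apply Rabs_le; lra.
    - pose proof (f_lip b x (2*qx - x) Hb ltac:(lra) ltac:(apply Rabs_le; lra)) as HL.
      assert (HL2: Rabs (2 * qx - x - x) <= g/4) by (apply Rabs_le; lra). fold fx in HL. split; lra. }
  apply Hq. apply (conv_pt A _ _ (1/2) qx qy HC Hp' Hr); simpl; [lra|field|field].
Qed.

Lemma glb_eq (E : R -> Prop) a : (forall x, E x -> a <= x) -> E a -> real (Glb_Rbar E) = a.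
Proof.
  intros H1 H2. destruct (Glb_Rbar_correct E) as [Hl Hg].
  assert (Hle: Rbar_le (Finite a) (Glb_Rbar E)) by (apply Hg; intros x Hx; simpl; auto).
  specialize (Hl a H2). destruct (Glb_Rbar E); simpl in *; try contradiction; lra.
Qed.

Lemma lub_bnd (E : R -> Prop) L U : (exists x, E x /\ L <= x) -> (forall x, E x -> x <= U) ->
  L <= real (Lub_Rbar E) <= U.
Proof.
  intros [x [Hx HL]] HU. destruct (Lub_Rbar_correct E) as [Hu Hl].
  assert (Hle: Rbar_le (Lub_Rbar E) (Finite U)) by (apply Hl; intros y Hy; simpl; auto).
  specialize (Hu x Hx). destruct (Lub_Rbar E); simpl in *; try contradiction; lra.
Qed.

Lemma sup_ineq b A sg T q : 1 < b < 2 -> Hyp b A -> sg * sg = 1 -> 0 <= T <= 1/5 -> A q ->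
  snd q - sg * T * fst q >= mf b T.
Proof.
  intros Hb HA Hsg HT Hq. destruct (x0_facts b T Hb HT) as [Hx [Hr [Hm Hm0]]].
  pose proof HA as [[_ [_ [HC _]]] _].
  set (x0 := x0f b T) in *. set (m := mf b T) in *.
  apply Rnot_lt_ge. intro Hlt.
  assert (Hsg1: Rabs sg = 1). { assert (Rabs sg * Rabs sg = 1) by (rewrite <- Rabs_mult, Hsg; apply Rabs_R1).
    pose proof (Rabs_pos sg). nra. }
  assert (HP0: A (sg * x0, pw x0 b)).
  { pose proof (graph_in b A (sg*x0) Hb HA). rewrite Rabs_mult, Hsg1, Rmult_1_l, Rabs_pos_eq in H by lra. apply H; lra. }
  assert (Hm': m = pw x0 b - sg * T * (sg * x0)).
  { unfold m, mf, hh. fold x0. rewrite Rabs_pos_eq by lra. replace (sg * T * (sg * x0)) with ((sg*sg) * T * x0) by ring. rewrite Hsg; ring. }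
  destruct q as [qx qy]; simpl in Hlt.
  set (d := Rabs (qx - sg * x0) + 1).
  assert (Hd: 1 <= d) by (unfold d; pose proof (Rabs_pos (qx - sg*x0)); lra).
  set (rho := Rmin 1 ((1/4) / d)).
  assert (Hrho: 0 < rho <= 1). { unfold rho. split. apply Rmin_glb_lt. lra. apply Rdiv_lt_0_compat; lra. apply Rmin_l. }
  assert (Hrd: rho * d <= 1/4).
  { assert (rho <= (1/4)/d) by apply Rmin_r. apply Rmult_le_reg_r with (/d). apply Rinv_0_lt_compat; lra.
    rewrite Rmult_assoc, Rinv_r by lra. unfold Rdiv in H. lra. }
  set (zx := (1 - rho) * (sg * x0) + rho * qx). set (zy := (1 - rho) * pw x0 b + rho * qy).
  assert (HZ: A (zx, zy)) by (apply (conv_pt A _ _ rho zx zy HC HP0 Hq); [lra|reflexivity|reflexivity]).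
  assert (Hzx: Rabs (zx - sg * x0) <= 1/4).
  { replace (zx - sg*x0) with (rho * (qx - sg * x0)) by (unfold zx; ring). rewrite Rabs_mult, (Rabs_pos_eq rho) by lra.
    unfold d in Hrd. pose proof (Rabs_pos (qx - sg * x0)). nra. }
  assert (Hzx2: Rabs zx <= 1/2).
  { pose proof (Rabs_triang (zx - sg*x0) (sg*x0)). replace (zx - sg*x0 + sg*x0) with zx in H by ring.
    rewrite Rabs_mult, Hsg1, (Rabs_pos_eq x0) in H by lra. lra. }
  apply (below_out b A zx zy Hb HA Hzx2); auto.
  pose proof (T_ineq b T (sg * zx) Hb HT) as HT2. fold m in HT2. unfold hh in HT2.
  rewrite Rabs_mult, Hsg1, Rmult_1_l in HT2.
  replace (T * (sg * zx)) with (sg * T * zx) in HT2 by ring.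
  assert (zy - sg * T * zx = (1 - rho) * m + rho * (qy - sg * T * qx)).
  { rewrite Hm'. unfold zy, zx. replace (sg * T * (sg * x0)) with ((sg*sg)*T*x0) by ring. rewrite Hsg.
    replace (sg * T * ((1 - rho) * (sg * x0) + rho * qx)) with ((sg*sg)*T*x0*(1-rho) + rho * (sg * T * qx)) by ring.
    rewrite Hsg. ring. }
  nra.
Qed.

Lemma chord_in_strip b A sg T mu b1 b2 p : 1 < b < 2 -> Hyp b A -> sg * sg = 1 -> 0 <= T <= 1/5 ->
  0 < mu <= 1/50 -> -1/2 <= b1 < x0f b T -> x0f b T < b2 <= 1/2 ->
  hh b T b1 > mf b T + mu -> hh b T b2 > mf b T + mu ->
  A p -> snd p - sg * T * fst p = mf b T + mu -> b1 < sg * fst p < b2.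
Proof.
  intros Hb HA Hsg HT Hmu Hb1 Hb2 Hh1 Hh2 Hp Hline.
  destruct (x0_facts b T Hb HT) as [Hx [Hr [Hm Hm0]]].
  pose proof HA as [[_ [_ [HC _]]] _].
  set (x0 := x0f b T) in *. set (m := mf b T) in *.
  assert (Hsg1: Rabs sg = 1). { assert (Rabs sg * Rabs sg = 1) by (rewrite <- Rabs_mult, Hsg; apply Rabs_R1).
    pose proof (Rabs_pos sg). nra. }
  assert (Hmx: m = pw x0 b - T * x0) by (unfold m, mf, hh; fold x0; rewrite Rabs_pos_eq by lra; ring).
  assert (HZ0: A (sg * x0, T * x0 + m + mu)).
  { apply above_in with b; auto. rewrite Rabs_mult, Hsg1, Rabs_pos_eq; lra.
    rewrite Rabs_mult, Hsg1, Rmult_1_l, Rabs_pos_eq by lra.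
    pose proof (pw_le_base x0 b ltac:(lra) ltac:(lra)). split; lra. }
  destruct p as [px py]; simpl in *.
  set (X := sg * px). assert (HpX: px = sg * X) by (unfold X; rewrite <- Rmult_assoc, Hsg; ring).
  assert (Hpy: py = m + mu + T * X) by (unfold X; rewrite <- Hline; ring).
  assert (Hsub: forall c, -1/2 <= c <= 1/2 -> hh b T c > m + mu -> forall rho, 0 <= rho <= 1 ->
     c = (1 - rho) * x0 + rho * X -> False).
  { intros c Hc Hhc rho Hrho Hcx.
    assert (HZ: A (sg * c, m + mu + T * c)).
    { apply (conv_pt A _ _ rho _ _ HC HZ0 Hp Hrho); simpl.
      rewrite HpX, Hcx; ring. rewrite Hpy, Hcx; ring. }
    apply (below_out b A (sg * c) (m + mu + T * c) Hb HA).
    rewrite Rabs_mult, Hsg1, Rmult_1_l. apply Rabs_le; lra.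
    rewrite Rabs_mult, Hsg1, Rmult_1_l. unfold hh in Hhc. lra. exact HZ. }
  split.
  - destruct (Rlt_or_le b1 X) as [H|H]; auto. exfalso.
    apply (Hsub b1 ltac:(lra) Hh1 ((x0 - b1) / (x0 - X))).
    + split. apply Rdiv_le_0_compat; lra. apply Rmult_le_reg_r with (x0 - X); [lra|].
      unfold Rdiv; rewrite Rmult_assoc, Rinv_l; lra.
    + field. lra.
  - destruct (Rlt_or_le X b2) as [H|H]; auto. exfalso.
    apply (Hsub b2 ltac:(lra) Hh2 ((b2 - x0) / (X - x0))).
    + split. apply Rdiv_le_0_compat; lra. apply Rmult_le_reg_r with (X - x0); [lra|].
      unfold Rdiv; rewrite Rmult_assoc, Rinv_l; lra.
    + field. lra.
Qed.

Lemma chord_bounds b A th co sg T lam L W : 1 < b < 2 -> Hyp b A -> 0 < co <= 1 -> sg * sg = 1 ->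
  0 <= T <= 1/5 -> 0 < lam -> lam / co <= 1/50 ->
  (forall y, dot y (u th) = co * (snd y - sg * T * fst y)) ->
  (exists x1 x2, -1/2 <= x1 <= x2 /\ x2 <= 1/2 /\ hh b T x1 <= mf b T + lam / co /\
       hh b T x2 <= mf b T + lam / co /\ L <= x2 - x1) ->
  Ubound b T (lam / co) W ->
  L <= chord_length A th lam <= 2 * W.
Proof.
  intros Hb HA Hco Hsg HT Hlam Hmu Hdot [x1 [x2 [Hx12 [Hx2 [Hh1 [Hh2 HL]]]]]] [b1 [b2 [Hb1 [Hb2 [Hhb1 [Hhb2 HW]]]]]].
  destruct (x0_facts b T Hb HT) as [Hx [Hr [Hm Hm0]]].
  set (x0 := x0f b T) in *. set (m := mf b T) in *. set (mu := lam / co) in *.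
  assert (Hmu0: 0 < mu) by (apply Rdiv_lt_0_compat; lra).
  assert (Hsg1: Rabs sg = 1). { assert (Rabs sg * Rabs sg = 1) by (rewrite <- Rabs_mult, Hsg; apply Rabs_R1).
    pose proof (Rabs_pos sg). nra. }
  assert (Hmx: m = pw x0 b - T * x0) by (unfold m, mf, hh; fold x0; rewrite Rabs_pos_eq by lra; ring).
  assert (HS: support_min A th = co * m).
  { unfold support_min. apply glb_eq.
    - intros r [y [Hy ->]]. rewrite Hdot. pose proof (sup_ineq b A sg T y Hb HA Hsg HT Hy). fold m in H.
      apply Rmult_le_compat_l; lra.
    - exists (sg * x0, pw x0 b). split.
      + pose proof (graph_in b A (sg*x0) Hb HA). rewrite Rabs_mult, Hsg1, Rmult_1_l, Rabs_pos_eq in H by lra. apply H; lra.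
      + rewrite Hdot. simpl. rewrite Hmx. replace (sg * T * (sg * x0)) with ((sg*sg)*T*x0) by ring. rewrite Hsg. ring. }
  assert (Hch: forall p, chord A th lam p -> A p /\ snd p - sg * T * fst p = m + mu).
  { intros p [Hp Hd]. split; auto. rewrite HS, Hdot in Hd. unfold mu.
    apply Rmult_eq_reg_l with co; [|lra]. rewrite Hd. field. lra. }
  unfold chord_length. apply lub_bnd.
  - set (p1 := (sg * x1, T * x1 + m + mu)). set (p2 := (sg * x2, T * x2 + m + mu)).
    assert (Hin: forall xx, -1/2 <= xx <= 1/2 -> hh b T xx <= m + mu -> chord A th lam (sg * xx, T * xx + m + mu)).
    { intros xx Hxx Hhx. split.
      - apply above_in with b; auto. rewrite Rabs_mult, Hsg1, Rmult_1_l. apply Rabs_le; lra.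
        rewrite Rabs_mult, Hsg1, Rmult_1_l. unfold hh in Hhx. split; nra.
      - rewrite HS, Hdot. simpl. replace (sg * T * (sg * xx)) with ((sg*sg)*T*xx) by ring. rewrite Hsg. unfold mu. field. lra. }
    exists (dist2 p2 p1). split.
    + exists p2, p1. split; [apply Hin; auto; lra|]. split; [apply Hin; auto; lra|]. auto.
    + unfold dist2, p1, p2. cbn [fst snd]. eapply Rle_trans; [|apply abs_le_dist].
      replace (sg * x2 - sg * x1) with (sg * (x2 - x1)) by ring. rewrite Rabs_mult, Hsg1, Rabs_pos_eq; lra.
  - intros r [p [q [Hp [Hq ->]]]]. apply Hch in Hp as [Hp Hlp]. apply Hch in Hq as [Hq Hlq].
    pose proof (chord_in_strip b A sg T mu b1 b2 p Hb HA Hsg HT ltac:(lra) Hb1 Hb2 Hhb1 Hhb2 Hp Hlp).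
    pose proof (chord_in_strip b A sg T mu b1 b2 q Hb HA Hsg HT ltac:(lra) Hb1 Hb2 Hhb1 Hhb2 Hq Hlq).
    destruct p as [px py]; destruct q as [qx qy]; simpl in *. unfold dist2; cbn [fst snd].
    assert (Hdy: py - qy = sg * T * (px - qx)) by lra.
    assert (Hdx: Rabs (px - qx) <= W).
    { assert (E: sg * (sg * px - sg * qx) = px - qx) by (replace (sg * (sg * px - sg * qx)) with ((sg*sg)*(px-qx)) by ring; rewrite Hsg; ring).
      rewrite <- E.
      rewrite Rabs_mult, Hsg1, Rmult_1_l. apply Rabs_le; lra. }
    rewrite Hdy. rewrite <- (sqrt_Rsqr (2*W)) by (pose proof (Rabs_pos (px-qx)); lra).
    apply sqrt_le_1_alt. unfold Rsqr.
    assert (Hpq: (px - qx)^2 <= W * W).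
    { revert Hdx. unfold Rabs; destruct Rcase_abs; intros; nra. }
    assert (sg*sg*T*T <= 1) by (rewrite Hsg; nra).
    replace ((px - qx) ^ 2 + (sg * T * (px - qx)) ^ 2) with ((px - qx)^2 * (1 + sg*sg*T*T)) by ring.
    assert (0 <= (px - qx)^2) by apply pow2_ge_0.
    assert (0 <= sg*sg*T*T) by (rewrite Hsg; nra).
    assert ((px - qx)^2 * (1 + sg*sg*T*T) <= (px-qx)^2 * 2) by (apply Rmult_le_compat_l; lra).
    nra.
Qed.

Lemma sin_small a : 0 <= a <= 1/10 -> a/2 <= sin a <= a /\ 99/100 <= cos a <= 1.
Proof.
  intros Ha.
  assert (HPI: 3 < PI) by (pose proof PI2_3_2; lra).
  pose proof (sin_bound a 0 ltac:(lra) ltac:(lra)) as [H1 H2].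
  pose proof (cos_bound a 0 ltac:(lra) ltac:(lra)) as [H3 H4].
  unfold sin_approx, cos_approx, sin_term, cos_term in *. simpl in *.
  repeat split; try nra.
Qed.

Lemma trig_setup th : Rabs th <= 1/10 ->
  exists sg T co, sg * sg = 1 /\ 99/100 <= co <= 1 /\ Rabs th / 2 <= T <= 2 * Rabs th /\
   (forall y, dot y (u (th + PI/2)) = co * (snd y - sg * T * fst y)).
Proof.
  intros Hth.
  assert (Hd: forall y, dot y (u (th + PI/2)) = - sin th * fst y + cos th * snd y).
  { intros y. unfold dot, u; simpl. rewrite cos_plus, sin_plus, cos_PI2, sin_PI2. ring. }
  destruct (Rle_or_lt 0 th) as [H|H].
  - rewrite Rabs_pos_eq in * by lra. destruct (sin_small th ltac:(lra)) as [[H1 H2] [H3 H4]].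
    assert (E: sin th / cos th * cos th = sin th) by (field; lra).
    exists 1, (sin th / cos th), (cos th). repeat split; try lra.
    + apply Rmult_le_reg_r with (cos th); [lra|]. rewrite E. nra.
    + apply Rmult_le_reg_r with (cos th); [lra|]. rewrite E. nra.
    + intros y. rewrite Hd. field. lra.
  - rewrite Rabs_left in * by lra. destruct (sin_small (-th) ltac:(lra)) as [[H1 H2] [H3 H4]].
    rewrite sin_neg in *. rewrite cos_neg in *.
    assert (E: - sin th / cos th * cos th = - sin th) by (field; lra).
    exists (-1), (- sin th / cos th), (cos th). repeat split; try lra.
    + apply Rmult_le_reg_r with (cos th); [lra|]. rewrite E. nra.
    + apply Rmult_le_reg_r with (cos th); [lra|]. rewrite E. nra.
    + intros y. rewrite Hd. field. lra.
Qed.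

Definition K0f b := pw 2 (/(b-1)).
Definition ef b := (2-b)/(2*(b-1)).
Definition c1f b := Rmin (1/2) (pw (1/4) (ef b) / 2).
Definition c2f b := 16*(K0f b*K0f b+2) + 8*sqrt(8/(b*(b-1)))*pw 2 (ef b)
   + 16*(K0f b * pw (16/(b*(b-1))) (/b) + 2).

Lemma c1f_pos b : 1 < b < 2 -> 0 < c1f b.
Proof. intros. unfold c1f. apply Rmin_glb_lt. lra. pose proof (pw_gt0 (1/4) (ef b) ltac:(lra)). lra. Qed.

Lemma K0_ge1 b : 1 < b < 2 -> 1 <= K0f b.
Proof. intros. unfold K0f. pose proof (pw_mono 1 2 (/(b-1))) as HH. rewrite pw_one in HH.
  apply HH. apply Rinv_0_lt_compat; lra. lra. Qed.

Lemma c2f_parts b : 1 < b < 2 -> 16*(K0f b*K0f b+2) <= c2f b /\ 8*sqrt(8/(b*(b-1)))*pw 2 (ef b) <= c2f b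
  /\ 16*(K0f b * pw (16/(b*(b-1))) (/b) + 2) <= c2f b /\ 0 < c2f b.
Proof.
  intros Hb. pose proof (K0_ge1 b Hb). pose proof (sqrt_pos (8/(b*(b-1)))). pose proof (pw_ge0 2 (ef b)).
  pose proof (pw_ge0 (16/(b*(b-1))) (/b)).
  assert (0 <= 8*sqrt(8/(b*(b-1)))*pw 2 (ef b)) by (apply Rmult_le_pos; [|auto]; lra).
  assert (0 <= K0f b * pw (16/(b*(b-1))) (/b)) by (apply Rmult_le_pos; lra).
  unfold c2f. repeat split; nra.
Qed.

Lemma lam_small b lam : 1 < b < 2 -> 0 < lam -> pw lam ((b-1)/b) < 1/10 -> lam < 1/100.
Proof.
  intros Hb Hl H.
  assert (E: pw (pw lam ((b-1)/b)) (b/(b-1)) = lam).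
  { rewrite pw_pw by lra. replace ((b-1)/b * (b/(b-1))) with 1 by (field; lra). apply pw_1; lra. }
  assert (pw (pw lam ((b-1)/b)) (b/(b-1)) < pw (1/10) (b/(b-1))).
  { apply pw_smono. apply Rdiv_lt_0_compat; lra. split; [apply pw_ge0|auto]. }
  assert (pw (1/10) (b/(b-1)) <= pw (1/10) 2).
  { apply pw_exp_anti; [lra|]. split; [lra|]. apply Rmult_le_reg_r with (b-1); [lra|].
    unfold Rdiv; rewrite Rmult_assoc, Rinv_l; lra. }
  rewrite pw_2 in H1 by lra. lra.
Qed.

Lemma pw_le_2 b x : 1 < b < 2 -> 0 <= x -> pw (2 * x) (/b) <= 2 * pw x (/b).
Proof.
  intros Hb Hx. rewrite pw_mul by lra. apply Rmult_le_compat_r. apply pw_ge0.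
  rewrite pw_pos by lra. rewrite <- (Rpower_1 2) at 2 by lra. apply Rle_Rpower. lra.
  rewrite <- Rinv_1. apply Rinv_le_contravar; lra.
Qed.

Lemma pw_kappa b lam : 1 < b < 2 -> 0 < lam -> pw (pw lam ((b-1)/b)) (/(b-1)) = pw lam (/b).
Proof. intros. rewrite pw_pw by lra. f_equal. field. lra. Qed.

Lemma case1 b A th lam : 1 < b < 2 -> Hyp b A -> 0 < lam -> Rabs th < pw lam ((b-1)/b) ->
  pw lam ((b-1)/b) < 1/10 ->
  c1f b * pw lam (/b) <= chord_length A (th + PI/2) lam <= c2f b * pw lam (/b).
Proof.
  intros Hb HA Hl Hth Hk.
  destruct (trig_setup th ltac:(lra)) as [sg [T [co [Hsg [Hco [HT Hdot]]]]]].
  pose proof (lam_small b lam Hb Hl Hk) as Hl2.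
  set (mu := lam / co).
  assert (Hmu: lam <= mu <= 2 * lam).
  { unfold mu. split. apply Rmult_le_reg_r with co; [lra|]. unfold Rdiv; rewrite Rmult_assoc, Rinv_l; nra.
    apply Rmult_le_reg_r with co; [lra|]. unfold Rdiv; rewrite Rmult_assoc, Rinv_l; nra. }
  assert (HT2: 0 <= T <= 1/5) by (pose proof (Rabs_pos th); lra).
  assert (Hmu2: 0 < mu <= 1/50) by lra.
  destruct (x0_facts b T Hb HT2) as [Hx [Hr [Hm Hm0]]].
  pose proof (L1 b T mu Hb HT2 Hmu2) as [Hs0 [Hs1 Hs2]].
  set (s := pw (mu/b) (/b)) in *.
  set (W := 4 * (pw 2 (/(b-1)) * K0f b + 2) * pw mu (/b)).
  assert (HU: Ubound b T mu W).
  { apply U1. auto. auto. auto. pose proof (K0_ge1 b Hb); lra.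
    assert (T / b <= 2 * pw lam ((b-1)/b)).
    { assert (T/b <= T). { apply Rmult_le_reg_r with b; [lra|]. unfold Rdiv; rewrite Rmult_assoc, Rinv_l; nra. } lra. }
    unfold x0f. eapply Rle_trans. apply pw_mono. apply Rinv_0_lt_compat; lra. split; [|exact H].
    apply Rdiv_le_0_compat; lra.
    rewrite pw_mul by (try lra; apply pw_ge0). rewrite pw_kappa by lra. fold (K0f b).
    apply Rmult_le_compat_l. pose proof (K0_ge1 b Hb); lra. apply pw_mono. apply Rinv_0_lt_compat; lra. lra. }
  assert (Hmain: s <= chord_length A (th + PI/2) lam <= 2 * W).
  { apply (chord_bounds b A (th + PI/2) co sg T lam s W Hb HA ltac:(lra) Hsg HT2 Hl ltac:(fold mu; lra) Hdot).
    - exists (x0f b T), (x0f b T + s). repeat split; try lra. fold mu. unfold mf. lra. fold mu. lra.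
    - exact HU. }
  assert (HsL: c1f b * pw lam (/b) <= s).
  { assert (c1f b <= 1/2) by apply Rmin_l.
    assert (pw (lam/2) (/b) <= s). { unfold s. apply pw_mono. apply Rinv_0_lt_compat; lra. split.
      apply Rdiv_le_0_compat; lra. unfold Rdiv. apply Rle_trans with (mu * /2); [lra|].
      apply Rmult_le_compat_l; [lra|]. apply Rinv_le_contravar; lra. }
    assert (pw (lam/2) (/b) = pw (1/2) (/b) * pw lam (/b)) by (rewrite <- pw_mul by lra; f_equal; field).
    assert (1/2 <= pw (1/2) (/b)). { apply pw_ge_base. lra. split. apply Rinv_0_lt_compat; lra.
      rewrite <- Rinv_1. apply Rinv_le_contravar; lra. }
    pose proof (pw_ge0 lam (/b)). pose proof (c1f_pos b Hb). nra. }
  assert (HWU: 2 * W <= c2f b * pw lam (/b)).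
  { pose proof (c2f_parts b Hb) as [Hc _].
    assert (pw mu (/b) <= 2 * pw lam (/b)).
    { eapply Rle_trans; [|apply pw_le_2; lra]. apply pw_mono. apply Rinv_0_lt_compat; lra. lra. }
    unfold W, K0f in *. pose proof (pw_ge0 lam (/b)). pose proof (pw_ge0 mu (/b)).
    pose proof (K0_ge1 b Hb). unfold K0f in H1.
    assert (2 * (4 * (pw 2 (/(b-1)) * pw 2 (/(b-1)) + 2) * pw mu (/b)) <= 16 * (pw 2 (/(b-1)) * pw 2 (/(b-1)) + 2) * pw lam (/b)).
    { assert (0 <= pw 2 (/(b-1)) * pw 2 (/(b-1)) + 2) by nra. nra. }
    nra. }
  lra.
Qed.

Lemma ef_pos b : 1 < b < 2 -> 0 < ef b.
Proof. intros. unfold ef. apply Rdiv_lt_0_compat; lra. Qed.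

Lemma pw_2e b z : 1 < b < 2 -> 0 <= z -> pw (pw z (/(b-1))) (2-b) = pw z (ef b) * pw z (ef b).
Proof.
  intros Hb [Hz|Hz].
  - rewrite pw_pw by lra. rewrite <- pw_plus by lra. f_equal. unfold ef. field. lra.
  - subst. rewrite (pw_npos 0 (/(b-1))) by lra. rewrite !pw_npos by lra. ring.
Qed.

Lemma sqrt_le_of b c : 0 <= c -> b <= c * c -> sqrt b <= c.
Proof. intros. rewrite <- (sqrt_Rsqr c) by auto. apply sqrt_le_1_alt. unfold Rsqr; lra. Qed.
Lemma le_sqrt_of b c : 0 <= c -> c * c <= b -> c <= sqrt b.
Proof. intros. rewrite <- (sqrt_Rsqr c) by auto. apply sqrt_le_1_alt. unfold Rsqr; lra. Qed.

Lemma case2 b A th lam : 1 < b < 2 -> Hyp b A -> 0 < lam -> pw lam ((b-1)/b) <= Rabs th ->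
  Rabs th < 1/10 ->
  c1f b * (sqrt lam * pw (Rabs th) (ef b)) <= chord_length A (th + PI/2) lam
    <= c2f b * (sqrt lam * pw (Rabs th) (ef b)).
Proof.
  intros Hb HA Hl Hth Hk.
  destruct (trig_setup th ltac:(lra)) as [sg [T [co [Hsg [Hco [HT Hdot]]]]]].
  pose proof (lam_small b lam Hb Hl ltac:(lra)) as Hl2.
  set (a := Rabs th) in *.
  assert (Ha: 0 < a) by (pose proof (pw_gt0 lam ((b-1)/b) Hl); lra).
  set (mu := lam / co).
  assert (Hmu: lam <= mu <= 2 * lam).
  { unfold mu. split. apply Rmult_le_reg_r with co; [lra|]. unfold Rdiv; rewrite Rmult_assoc, Rinv_l; nra.
    apply Rmult_le_reg_r with co; [lra|]. unfold Rdiv; rewrite Rmult_assoc, Rinv_l; nra. }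
  assert (HT2: 0 <= T <= 1/5) by lra.
  assert (Hmu2: 0 < mu <= 1/50) by lra.
  destruct (x0_facts b T Hb HT2) as [Hx [Hr [Hm Hm0]]].
  set (x0 := x0f b T) in *.
  assert (ETb: T/b*b = T) by (field; lra).
  assert (HTb1: a/4 <= T/b).
  { apply Rmult_le_reg_r with b; [lra|]. rewrite ETb. nra. }
  assert (HTb2: T/b <= 2*a).
  { apply Rmult_le_reg_r with b; [lra|]. rewrite ETb. nra. }
  assert (Hib: 0 < /(b-1)) by (apply Rinv_0_lt_compat; lra).
  assert (Hx0p: 0 < x0) by (unfold x0, x0f; apply pw_gt0; lra).
  assert (Hx0a: pw (a/4) (/(b-1)) <= x0) by (unfold x0, x0f; apply pw_mono; lra).
  assert (Hx0b: x0 <= pw (2*a) (/(b-1))) by (unfold x0, x0f; apply pw_mono; lra).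
  set (Q := pw x0 (b-2)). set (Q' := pw x0 (2-b)).
  assert (HQ: 0 < Q) by (apply pw_gt0; lra). assert (HQ': 0 < Q') by (apply pw_gt0; lra).
  assert (HQQ: Q * Q' = 1). { unfold Q, Q'. rewrite <- pw_plus by lra. replace (b-2+(2-b)) with 0 by ring.
    rewrite pw_pos by lra. apply Rpower_O; lra. }
  set (P := pw a (ef b)). pose proof (ef_pos b Hb) as He.
  assert (HP: 0 < P) by (apply pw_gt0; lra).
  assert (HQ'lo: (pw (1/4) (ef b) * P) * (pw (1/4) (ef b) * P) <= Q').
  { unfold Q'. eapply Rle_trans; [|apply pw_mono; [lra|split; [apply pw_ge0|exact Hx0a]]].
    rewrite pw_2e by lra. unfold P. replace (a/4) with (1/4*a) by field. rewrite (pw_mul (1/4) a) by lra. lra. }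
  assert (HQ'hi: Q' <= (pw 2 (ef b) * P) * (pw 2 (ef b) * P)).
  { unfold Q'. eapply Rle_trans; [apply pw_mono; [lra|split; [lra|exact Hx0b]]|].
    rewrite pw_2e by lra. unfold P. rewrite (pw_mul 2 a) by lra. lra. }
  assert (Hsl: sqrt lam * sqrt lam = lam) by (apply sqrt_sqrt; lra).
  assert (Hsl0: 0 <= sqrt lam) by apply sqrt_pos.
  assert (HmuQ: mu / (b * Q) = mu * Q' / b) by (field_simplify_eq; [|lra]; nra).
  pose proof (L2 b T mu Hb HT2 Hmu2 Hx0p) as [Hs0 [Hs1 Hs2]]. fold x0 Q in Hs0, Hs1, Hs2.
  set (s := sqrt (mu / (b * Q))) in *.
  set (C := pw (1/4) (ef b)). fold C in HQ'lo.
  assert (HC: 0 < C) by (apply pw_gt0; lra).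
  assert (HsL: c1f b * (sqrt lam * P) <= s).
  { assert (c1f b <= C/2) by apply Rmin_r.
    assert ((C/2) * (sqrt lam * P) <= s).
    { apply le_sqrt_of. apply Rmult_le_pos; [lra|]. apply Rmult_le_pos; lra.
      rewrite HmuQ. replace (C / 2 * (sqrt lam * P) * (C / 2 * (sqrt lam * P))) with ((sqrt lam * sqrt lam) * ((C*P)*(C*P)) / 4) by field.
      rewrite Hsl. apply Rmult_le_reg_r with b; [lra|]. unfold Rdiv. rewrite (Rmult_assoc (mu * Q')), Rinv_l, Rmult_1_r by lra.
      assert (0 <= (C*P)*(C*P)) by nra.
      assert (lam * ((C*P)*(C*P)) <= lam * Q') by (apply Rmult_le_compat_l; lra).
      assert (lam * Q' <= mu * Q') by (apply Rmult_le_compat_r; lra).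
      assert (lam * ((C*P)*(C*P)) * b <= lam * ((C*P)*(C*P)) * 2) by (apply Rmult_le_compat_l; nra).
      replace (lam * (C * P * (C * P)) * / 4 * b) with ((lam * (C * P * (C * P)) * b) * /4) by ring. assert (0 <= mu * Q') by nra. lra. }
    pose proof (c1f_pos b Hb). assert (0 <= sqrt lam * P) by nra. nra. }
  assert (HU: exists W, Ubound b T mu W /\ 2 * W <= c2f b * (sqrt lam * P)).
  { pose proof (c2f_parts b Hb) as [Hc1 [Hc2 [Hc3 Hc4]]].
    assert (Hslq: 0 <= sqrt lam * P) by nra.
    destruct (Rle_lt_dec (16 * mu / (b * (b-1))) (pw x0 b)) as [Hbig|Hsmall].
    - eexists; split. apply U2; auto. fold x0 Q.
      set (D := sqrt (8/(b*(b-1))) * pw 2 (ef b)).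
      assert (HD: 0 <= D) by (unfold D; apply Rmult_le_pos; [apply sqrt_pos|apply pw_ge0]).
      assert (sqrt (4 * mu / (b * (b - 1) * Q)) <= D * (sqrt lam * P)).
      { apply sqrt_le_of. nra.
        assert (Hs8: sqrt (8/(b*(b-1))) * sqrt (8/(b*(b-1))) = 8/(b*(b-1))) by (apply sqrt_sqrt; left; apply Rdiv_lt_0_compat; nra).
        replace (D * (sqrt lam * P) * (D * (sqrt lam * P))) with
          ((sqrt (8/(b*(b-1))) * sqrt (8/(b*(b-1)))) * (sqrt lam * sqrt lam) * ((pw 2 (ef b) * P) * (pw 2 (ef b) * P))) by (unfold D; ring).
        rewrite Hs8, Hsl.
        replace (4 * mu / (b * (b - 1) * Q)) with (4 / (b*(b-1)) * (mu * Q')) by (field_simplify_eq; [|nra]; nra).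
        assert (0 < 4/(b*(b-1))) by (apply Rdiv_lt_0_compat; nra).
        assert (mu * Q' <= 2 * lam * ((pw 2 (ef b) * P) * (pw 2 (ef b) * P))) by nra.
        replace (8 / (b * (b - 1)) * lam * (pw 2 (ef b) * P * (pw 2 (ef b) * P))) with
           (4 / (b*(b-1)) * (2 * lam * (pw 2 (ef b) * P * (pw 2 (ef b) * P)))) by (field; nra).
        apply Rmult_le_compat_l; lra. }
      unfold D in *. nra.
    - set (K0' := pw (16 / (b * (b-1))) (/b)).
      assert (HK0': 0 < K0') by (apply pw_gt0; apply Rdiv_lt_0_compat; nra).
      eexists; split. apply U1 with (K0 := K0'); auto.
      + fold x0. assert (x0 = pw (pw x0 b) (/b)) by (rewrite pw_pw by lra; rewrite Rinv_r by lra; rewrite pw_1; lra).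
        rewrite H. unfold K0'. rewrite <- pw_mul by (try lra; left; apply Rdiv_lt_0_compat; nra).
        left. apply pw_smono. apply Rinv_0_lt_compat; lra. split. apply pw_ge0.
        replace (16 / (b * (b - 1)) * mu) with (16 * mu / (b * (b - 1))) by (field; nra). auto.
      + assert (Hlb: pw lam (/b) <= sqrt lam * P).
        { replace (/b) with (/2 + (2-b)/(2*b)) by (field; lra). rewrite pw_plus by lra.
          rewrite pw_pos with (q := /2) by lra. rewrite Rpower_sqrt by lra.
          apply Rmult_le_compat_l; auto.
          replace ((2-b)/(2*b)) with ((b-1)/b * ef b) by (unfold ef; field; lra).
          rewrite <- pw_pw by lra. unfold P. apply pw_mono; [lra|]. split; [apply pw_ge0|auto]. }
        assert (pw mu (/b) <= 2 * pw lam (/b)).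
        { eapply Rle_trans; [|apply pw_le_2; lra]. apply pw_mono. apply Rinv_0_lt_compat; lra. lra. }
        pose proof (K0_ge1 b Hb). pose proof (pw_ge0 mu (/b)).
        assert (0 <= K0f b * K0' + 2) by nra.
        unfold K0f in *. unfold K0' in *.
        set (KK := pw 2 (/ (b - 1)) * pw (16 / (b * (b - 1))) (/ b) + 2) in *.
        assert (2 * (4 * KK * pw mu (/b)) <= 16 * KK * (sqrt lam * P)) by nra.
        nra. }
  destruct HU as [W [HU HW]].
  assert (Hmain: s <= chord_length A (th + PI/2) lam <= 2 * W).
  { apply (chord_bounds b A (th + PI/2) co sg T lam s W Hb HA ltac:(lra) Hsg HT2 Hl ltac:(fold mu; lra) Hdot).
    - exists x0, (x0 + s). repeat split; try lra. fold mu. unfold mf. fold x0. lra. fold mu. lra.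
    - exact HU. }
  lra.
Qed.

Theorem proposition3p3 :
  exists c : R, 0 < c /\
  forall beta : R, 1 < beta < 2 ->
  exists c1 c2 : R, 0 < c1 /\ 0 < c2 /\
  forall A : pt -> Prop,
    convex_body A -> centrally_symmetric A -> y_axis_symmetric A ->
    boundary_is_graph beta A ->
    forall theta lambda : R, 0 < lambda ->
      (Rabs theta < Rpower lambda ((beta - 1) / beta) ->
       Rpower lambda ((beta - 1) / beta) < c ->
         c1 * Rpower lambda (1 / beta)
           <= chord_length A (theta + PI / 2) lambda
           <= c2 * Rpower lambda (1 / beta)) /\
      (Rpower lambda ((beta - 1) / beta) <= Rabs theta ->
       Rabs theta < c ->
         c1 * (sqrt lambda * Rpower (Rabs theta) ((2 - beta) / (2 * (beta - 1))))
           <= chord_length A (theta + PI / 2) lambda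
           <= c2 * (sqrt lambda * Rpower (Rabs theta) ((2 - beta) / (2 * (beta - 1))))).
Proof.
  exists (1/10). split; [lra|]. intros b Hb.
  exists (c1f b), (c2f b). split; [apply c1f_pos; auto|]. split; [apply (c2f_parts b Hb)|].
  intros A HA _ _ HG th lam Hl.
  assert (HH: Hyp b A) by (split; auto).
  rewrite <- !(pw_pos lam) by auto.
  replace (1/b) with (/b) by (field; lra).
  split; intros H1 H2.
  - apply case1; auto.
  - assert (0 < Rabs th) by (pose proof (pw_gt0 lam ((b-1)/b) Hl); lra).
    rewrite <- pw_pos by auto. apply case2; auto.
Qed.
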